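(* A digraph $X$ has every eigenvalue of $H(X)$ in $\{-1,1\}$ if and only if $\Gamma(X)\cong mK_2$ (the disjoint union of $m$ copies of $K_2$) for some $m$.
   Context: A digraph $X$ has a finite vertex set and an arc set of ordered pairs of distinct vertices. The underlying graph $\Gamma(X)$ is the simple graph with an edge $\{x,y\}$ whenever $xy$ or $yx$ is an arc. The Hermitian adjacency matrix $H(X)$ has $(u,v)$-entry $1$ if $uv$ and $vu$ are arcs, $i$ if only $uv$ is an arc, $-i$ if only $vu$ is an arc, and $0$ otherwise. *)

(* Defs.v *)
From HB Require Import structures.
From mathcomp Require Import all_boot all_order all_algebra all_field.
From mathcomp Require Import algC.
Set Implicit Arguments. Unset Strict Implicit. Unset Printing Implicit Defensive.
Import Order.TTheory GRing.Theory Num.Theory.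
Local Open Scope ring_scope.

Definition digraph (V : finType) (arc : rel V) : Prop := irreflexive arc.

Definition underlying (V : finType) (arc : rel V) : rel V :=
  fun x y => arc x y || arc y x.

Definition hermEntry (V : finType) (arc : rel V) (u v : V) : algC :=
  if arc u v && arc v u then 1
  else if arc u v then 'i
  else if arc v u then - 'i
  else 0.

Definition hermAdj (V : finType) (arc : rel V) : 'M[algC]_#|V| :=
  \matrix_(i, j) hermEntry arc (enum_val i) (enum_val j).

Definition mK2 (m : nat) : rel ('I_m * bool)%type :=
  fun p q => (p.1 == q.1) && (p.2 != q.2).

Definition graph_iso (V W : finType) (e : rel V) (f : rel W) : Prop :=
  exists g : V -> W, bijective g /\ forall x y, e x y = f (g x) (g y).
Arguments mK2 m : clear implicits.

(* Main.v *)
Require Import Defs.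
From mathcomp Require Import all_boot all_order all_algebra all_field.
From mathcomp Require Import algC.
Import GRing.Theory Num.Theory.
Local Open Scope ring_scope.

Section Aux.
Variables (V : finType) (arc : rel V).

Lemma hE_conj u v : (hermEntry arc u v)^* = hermEntry arc v u.
Proof.
rewrite /hermEntry; case: (arc u v); case: (arc v u) => /=.
- by rewrite conjC1.
- by rewrite conjCi.
- by rewrite -conjCi conjCK.
- by rewrite conjC0.
Qed.

Lemma hEE u v :
  hermEntry arc u v * hermEntry arc v u = (underlying arc u v)%:R.
Proof.
rewrite /underlying /hermEntry; case: (arc u v); case: (arc v u) => /=;
  by rewrite ?mulr1 ?mulr0 ?mulrN ?mulNr ?mulCii ?opprK.
Qed.

Lemma hE0 u v : ~~ underlying arc u v -> hermEntry arc u v = 0.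
Proof.
by rewrite /underlying /hermEntry negb_or => /andP[/negbTE-> /negbTE->].
Qed.

Lemma usym u v : underlying arc u v = underlying arc v u.
Proof. by rewrite /underlying orbC. Qed.

Lemma sq_iff :
  hermAdj arc *m hermAdj arc = 1%:M <->
  exists p : V -> V, forall u v, underlying arc u v = (v == p u).
Proof.
split.
- move=> AA.
  have /fin_all_exists [p Hp] :
      forall u, exists w, forall v, underlying arc u v = (v == w).
    move=> u; have /matrixP/(_ (enum_rank u) (enum_rank u)) := AA.
    rewrite !mxE eqxx /=.
    under eq_bigr => j _ do rewrite !mxE enum_rankK hEE.
    rewrite -natr_sum => /eqP; rewrite pnatr_eq1.
    rewrite (eq_bigr (fun j => if underlying arc u (enum_val j) then 1%N else 0%N)); last by [].
    rewrite -big_mkcond sum1_card => /card1P [j Hj].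
    exists (enum_val j) => v; apply/idP/eqP.
      move=> uv; have := Hj (enum_rank v); rewrite unfold_in /= enum_rankK.
      by rewrite -/(underlying arc u v) uv => /esym/eqP <-; rewrite enum_rankK.
    by move=> ->; have := Hj j; rewrite unfold_in /= inE eqxx.
  by exists p.
- move=> [p Hp]; apply/matrixP => i k; rewrite !mxE.
  have [<-|ik] := eqVneq i k.
    rewrite (bigD1 (enum_rank (p (enum_val i)))) //= !mxE enum_rankK hEE Hp eqxx.
    rewrite big1 ?addr0 // => j /negbTE jn; rewrite !mxE hEE Hp.
    case: eqP => // h; by rewrite -h enum_valK eqxx in jn.
  rewrite big1 // => j _; rewrite !mxE.
  case uij: (underlying arc (enum_val i) (enum_val j)); last by rewrite hE0 ?uij ?mul0r.
  rewrite [hermEntry _ (enum_val j) _]hE0 ?mulr0 //; apply/negP => ujk.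
  move: uij ujk; rewrite Hp [underlying _ (enum_val j) _]Hp => /eqP hj /eqP hk.
  have : underlying arc (enum_val j) (enum_val i) by rewrite usym Hp hj.
  rewrite Hp -hk => /eqP /enum_val_inj ei; by rewrite ei eqxx in ik.
Qed.

Lemma eig_sq n (A : 'M[algC]_n) : A *m A = 1%:M ->
  forall a, eigenvalue A a -> a = 1 \/ a = -1.
Proof.
move=> AA a /eigenvalueP [v Hv nz].
have : v *m (A *m A) = a ^+ 2 *: v by rewrite mulmxA Hv -scalemxAl Hv scalerA expr2.
rewrite AA mulmx1 => /eqP; rewrite -subr_eq0 -{1}[v]scale1r -scalerBl scaler_eq0.
rewrite (negbTE nz) orbF subr_eq0 eq_sym sqrf_eq1 => /orP[] /eqP; by auto.
Qed.

Lemma pair_eq (T : finType) (A : {pred T}) (x y : 'I_#|A| * bool) :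
  enum_val x.1 = enum_val y.1 -> x.2 = y.2 -> x = y.
Proof. by case: x => a b; case: y => c d /= /enum_val_inj -> ->. Qed.

Lemma iso_of_p (hX : digraph arc) (p : V -> V)
  (Hp : forall u v, underlying arc u v = (v == p u)) :
  exists m, graph_iso (underlying arc) (mK2 m).
Proof.
have pu u : p u != u.
  apply/negP => /eqP h; have := Hp u u; rewrite h eqxx /underlying.
  by rewrite (hX u).
have pp u : p (p u) = u.
  by apply/esym/eqP; rewrite -Hp usym Hp.
pose S := [set u | (enum_rank u < enum_rank (p u))%N].
have Sx u : (u \in S) = ~~ (p u \in S).
  rewrite !inE pp; case: ltngtP => // /val_inj /enum_rank_inj h.
  by move: (pu u); rewrite -h eqxx.
pose r u := if u \in S then u else p u.
have rS u : r u \in S by rewrite /r; case: ifP => // /negbT; rewrite Sx negbK.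
pose g u := (enum_rank_in (rS u) (r u), u \in S).
have g1 u : enum_val (g u).1 = r u by apply: (enum_rankK_in (rS u) (rS u)).
exists #|S|, g; split.
  pose h (q : 'I_#|S| * bool) := let s := enum_val q.1 in if q.2 then s else p s.
  exists h.
    move=> u; rewrite /h g1 /= /r; case: (boolP (u \in S)) => /= uS.
      by [].
    exact: pp.
  move=> [i b]; have iS : enum_val i \in S := enum_valP i.
  apply: pair_eq.
    transitivity (r (h (i, b))); first exact: g1.
    rewrite /r /h /=; case: b => /=; first by rewrite iS.
    by rewrite Sx pp iS.
  rewrite /= /h /=; case: b => /=; first by rewrite iS.
  by rewrite Sx pp iS.
move=> x y; rewrite /mK2 -(inj_eq enum_val_inj) !g1 /= Hp /r.
have sw : (y == p x) = (x == p y) by apply/eqP/eqP => ->; rewrite pp.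
case xS: (x \in S); case yS: (y \in S) => /=; rewrite ?andbF ?andbT //.
- apply/negP => /eqP e; move: xS; rewrite Sx -e yS //.
- apply/negP => /eqP e; move: xS; rewrite Sx -e yS //.
Qed.

Lemma p_of_iso m : graph_iso (underlying arc) (mK2 m) ->
  exists p : V -> V, forall u v, underlying arc u v = (v == p u).
Proof.
move=> [g [[h gK hK] Hg]].
exists (fun u => h ((g u).1, ~~ (g u).2)) => u v.
rewrite Hg /mK2 -(inj_eq (can_inj gK)) hK.
case: (g u) (g v) => [a b] [c d] /=; rewrite xpair_eqE eq_sym.
by case: b; case: d.
Qed.

End Aux.

Local Open Scope sesquilinear_scope.

Lemma herm_normal (V : finType) (arc : rel V) : hermAdj arc \is normalmx.
Proof.
have h : (hermAdj arc) ^t* = hermAdj arc.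
  by apply/matrixP => i j; rewrite !mxE hE_conj.
by apply/normalmxP; rewrite h.
Qed.

Lemma sq_of_eig n (A : 'M[algC]_n) : A \is normalmx ->
  (forall a, eigenvalue A a -> a = 1 \/ a = -1) -> A *m A = 1%:M.
Proof.
move=> /orthomx_spectralP eA H.
move: eA; set P := spectralmx A; set D := spectral_diag A => eA.
have Pu : P \in unitmx := spectral_unit A.
have HD i : D 0 i * D 0 i = 1.
  have : eigenvalue A (D 0 i).
    apply/eigenvalueP; exists (delta_mx 0 i *m P).
      rewrite {1}eA !mulmxA (mulmxK Pu) mul_mx_diag scalemxAl; congr (_ *m _).
      apply/matrixP => a b; rewrite !mxE ord1 /=.
      by case: eqP => [<-|]; rewrite ?mul0r ?mulr0 //= ?mul1r ?mulr1.
    apply/negP => /eqP e; have := congr1 (mulmx^~ (invmx P)) e.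
    rewrite /= (mulmxK Pu) mul0mx => /matrixP /(_ 0 i); rewrite !mxE !eqxx /=.
    by move/eqP; rewrite oner_eq0.
  by case/H => ->; rewrite ?mulr1 ?mulrNN ?mulr1.
have dd : diag_mx D *m diag_mx D = 1%:M.
  rewrite mul_mx_diag; apply/matrixP => a b; rewrite !mxE.
  by case: eqP => [->|]; rewrite ?mul0r //= mulr1n HD.
rewrite eA !mulmxA (mulmxK Pu) -(mulmxA (invmx P)) dd mulmx1 mulVmx //.
Qed.

Theorem theorem9p1 (V : finType) (arc : rel V) (hX : digraph arc) :
  (forall a : algC, eigenvalue (hermAdj arc) a -> a = 1 \/ a = -1) <->
  (exists m : nat, graph_iso (underlying arc) (mK2 m)).
Proof.
split.
- move=> Heig; have AA := @sq_of_eig _ _ (@herm_normal _ arc) Heig.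
  have [p Hp] := (@sq_iff _ arc).1 AA; exact: (@iso_of_p _ arc hX p Hp).
- move=> [m iso]; have [p Hp] := @p_of_iso _ arc m iso.
  apply: eig_sq; apply/(@sq_iff _ arc); by exists p.
Qed.
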